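(* If $q<p$ are primes, then $N_{=}(qp)\ge p^2+2q^2p-4qp+2+(p-1)\min\{q-1,p-q\}$.
   Context: Graphs are finite, undirected and simple; the order of a graph is its number of vertices. For a positive integer $k$, $N_{=}(k)$ denotes the smallest integer $n\ge1$ such that every graph on $n$ vertices contains an induced regular subgraph (all vertices of the subgraph having the same degree within it) of order exactly $k$. *)

(* Defs.v *)
From mathcomp Require Import all_boot.
Set Implicit Arguments. Unset Strict Implicit. Unset Printing Implicit Defensive.

Definition simple_graph (n : nat) (g : rel 'I_n) : Prop :=
  irreflexive g /\ symmetric g.

Definition induced_regular (n : nat) (g : rel 'I_n) (S : {set 'I_n}) : Prop :=
  exists d : nat, forall v, v \in S -> #|[set u in S | g v u]| = d.

Definition has_induced_regular_of_order (n : nat) (g : rel 'I_n) (k : nat) : Prop :=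
  exists S : {set 'I_n}, #|S| = k /\ induced_regular g S.

(* Property whose least witness n >= 1 is N_=(k): every graph on n vertices
   contains an induced regular subgraph of order exactly k. *)
Definition forces_regular (k n : nat) : Prop :=
  forall g : rel 'I_n, simple_graph g -> has_induced_regular_of_order g k.

(* Main.v *)
Require Import Defs.
From mathcomp Require Import all_boot zify.
Set Implicit Arguments. Unset Strict Implicit. Unset Printing Implicit Defensive.



Definition noreg (T : finType) (g : rel T) (k : nat) : Prop :=
  forall S : {set T}, #|S| = k ->
    ~ (exists d : nat, forall v, v \in S -> #|[set u in S | g v u]| = d).

Lemma transfer (T : finType) (g : rel T) k n :
  irreflexive g -> symmetric g -> n <= #|T| -> noreg g k -> ~ forces_regular k n.
Proof.
move=> irr sym Hn NR F.
pose f (i : 'I_n) : T := enum_val (widen_ord Hn i).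
have finj : injective f.
  by move=> i j /enum_val_inj /(congr1 val) /= /val_inj.
pose g' : rel 'I_n := fun i j => g (f i) (f j).
have [S [cS [d Hd]]] := F g' (conj (fun i => irr (f i)) (fun i j => sym (f i) (f j))).
apply: (NR (f @: S)); first by rewrite card_imset.
exists d => v /imsetP [w wS ->].
rewrite -(Hd w wS).
have -> : [set u in f @: S | g (f w) u] = f @: [set u in S | g' w u].
  apply/setP => u; rewrite inE; apply/andP/imsetP.
    by case=> /imsetP [x xS ->] gx; exists x => //; rewrite inE xS.
  by case=> x; rewrite inE => /andP [xS gx] ->; split => //; apply: imset_f.
by rewrite card_imset.
Qed.

Lemma inj_bound (T : finType) (A : {set T}) (f : T -> nat) n :
  {in A &, injective f} -> (forall x, x \in A -> f x < n) -> #|A| <= n.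
Proof.
move=> finj fb.
have u : uniq (map f (enum A)) by rewrite map_inj_in_uniq ?enum_uniq // => x y; rewrite !mem_enum; apply: finj.
rewrite cardE -(size_map f) -(size_iota 0 n); apply: uniq_leq_size => // y /mapP [x].
by rewrite mem_enum mem_iota add0n => /fb xb ->.
Qed.

Section Constr.
Variables p q : nat.
Hypothesis hp : prime p.
Hypothesis hq : prime q.
Hypothesis hqp : q < p.

Definition mm := minn (q-1) (p-q).
Definition ns := q*p - 2*p + 1.
Definition U := ('I_(p-1) * 'I_3 + 'I_ns)%type.
Definition hs (h : nat) := if h < q-1 then q*p-1 else p-1.
Definition usz (u : U) : nat :=
  match u with
  | inl (h, k) => if val k == 0 then hs h else if val k == 1 then mm else q-1
  | inr _ => q-1
  end.
Definition V := {u : U & 'I_(usz u)}.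
Definition kd (u : U) : nat := match u with inl (_, k) => val k | inr _ => 3 end.
Definition hd (u : U) : nat := match u with inl (h, _) => val h | inr _ => 0 end.
Definition K (x : V) := kd (tag x).
Definition H (x : V) := hd (tag x).
Definition ix (x : V) : nat := val (tagged x).
Definition cls (x : V) := ix x < q-1.
Definition cr (x y : V) :=
  [&& (K x == 1) || (K x == 2), K y == 0, H x == H y & (K x == 1) == cls y].
Definition adj (x y : V) := (x != y) && [|| tag x == tag y, cr x y | cr y x].

Lemma kd_le u : kd u <= 3.
Proof. by case: u => [[h k]|s] //=; case: k => [[|[|[|]]]]. Qed.

Lemma unit_eq (u v : U) : kd u <= 2 -> (u == v) = (kd u == kd v) && (hd u == hd v).
Proof.
case: u => [[h k]|s]; case: v => [[h' k']|s'] //=.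
- by move=> _; rewrite [inl _ == _]/eq_op /= xpair_eqE andbC.
- by case: k => [[|[|[|]]]].
Qed.


Lemma tagE x y : K x <= 2 -> (tag x == tag y) = (K x == K y) && (H x == H y).
Proof. exact: unit_eq. Qed.

Lemma adj_irr : irreflexive adj.
Proof. by move=> x; rewrite /adj eqxx. Qed.

Lemma adj_sym : symmetric adj.
Proof.
by move=> x y; rewrite /adj eq_sym [tag x == _]eq_sym; congr (_ && (_ || _)); rewrite orbC.
Qed.

Lemma K_le x : K x <= 3.
Proof. exact: kd_le. Qed.

Lemma neqK x y : K x != K y -> x != y.
Proof. by apply: contraNneq => ->. Qed.

Definition att (c : bool) := if c then 1 else 2.

Lemma adj_host v u : K v = 0 ->
  adj v u = ((K u == 0) && (H u == H v) && (u != v)) || ((K u == att (cls v)) && (H u == H v)).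
Proof.
move=> Kv; rewrite /adj tagE ?Kv // /cr Kv /= eq_sym [u == v]eq_sym.
have vu : K u != 0 -> v != u by move=> h; rewrite eq_sym neqK // Kv.
have := K_le u.
case Ku: (K u) vu => [|[|[|[|]]]] //= vu _.
- by rewrite orbF /att; case: (cls v); rewrite /= orbF [H v == _]eq_sym andbC.
- by rewrite (vu isT) /att; case: (cls v); case: (H u == H v).
- by rewrite (vu isT) /att; case: (cls v); case: (H u == H v).
- by rewrite andbF /att; case: (cls v).
Qed.

Lemma adj_att w u : (K w == 1) || (K w == 2) ->
  adj w u = ((K u == K w) && (H u == H w) && (u != w)) || ((K u == 0) && (H u == H w) && (cls u == (K w == 1))).
Proof.
move=> Kw; have Kw2 : K w <= 2 by case/orP: Kw => /eqP ->.
rewrite /adj tagE // /cr Kw /= eq_sym [u == w]eq_sym.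
have := K_le u.
have wu : K u != K w -> w != u by move=> h; rewrite eq_sym neqK.
case/orP: Kw => /eqP Kw; rewrite Kw in wu *;
case Ku: (K u) wu => [|[|[|[|]]]] //= wu _; rewrite ?(wu isT) /= ?andbF ?orbF ?andbT ?[H w == _]eq_sym //;
  by case: (cls u); case: (H u == H w); case: (w != u).
Qed.


Lemma adj_st y u : K y = 3 -> adj y u = (tag u == tag y) && (u != y).
Proof.
move=> Ky; rewrite /adj /cr Ky /= andbF orbF eq_sym [u == y]eq_sym andbC.
by case: (y != u); rewrite ?andbF ?andbT // eq_sym.
Qed.

Lemma card_or (S : {set V}) (P Q : pred V) :
  (forall u, u \in S -> P u -> Q u -> False) ->
  #|[set u in S | P u || Q u]| = #|[set u in S | P u]| + #|[set u in S | Q u]|.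
Proof.
move=> ex.
have -> : [set u in S | P u || Q u] = [set u in S | P u] :|: [set u in S | Q u].
  by apply/setP => u; rewrite !inE andb_orr.
rewrite cardsU.
have -> : [set u in S | P u] :&: [set u in S | Q u] = set0.
  apply/setP => u; rewrite !inE.
  case uS: (u \in S) => //=; case Pu: (P u) => //=; case Qu: (Q u) => //.
  by case: (ex u uS Pu Qu).
by rewrite cards0 subn0.
Qed.

Lemma card_minus (S : {set V}) (P : pred V) v : v \in S -> P v ->
  #|[set u in S | P u && (u != v)]| = #|[set u in S | P u]| - 1.
Proof.
move=> vS Pv.
rewrite (cardsD1 v [set u in S | P u]) inE vS Pv /= add1n subSS subn0.
by apply: eq_card => u; rewrite !inE; case: (u == v); rewrite ?andbF ?andbT //= andbC.
Qed.

Definition cHo (S : {set V}) h := #|[set u in S | (K u == 0) && (H u == h)]|.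
Definition cC (S : {set V}) h c := #|[set u in S | (K u == 0) && (H u == h) && (cls u == c)]|.
Definition cT (S : {set V}) h c := #|[set u in S | (K u == att c) && (H u == h)]|.

Lemma deg_host (S : {set V}) v : v \in S -> K v = 0 ->
  #|[set u in S | adj v u]| = cHo S (H v) - 1 + cT S (H v) (cls v).
Proof.
move=> vS Kv.
have -> : [set u in S | adj v u] = [set u in S |
   ((K u == 0) && (H u == H v) && (u != v)) || ((K u == att (cls v)) && (H u == H v))].
  by apply/setP => u; rewrite !inE adj_host.
rewrite card_or; first by rewrite card_minus // Kv !eqxx.
by move=> u _ /andP [/andP [/eqP -> _] _] /andP [/eqP]; rewrite /att; case: (cls v).
Qed.

Lemma deg_att (S : {set V}) w c : w \in S -> K w = att c ->
  #|[set u in S | adj w u]| = cT S (H w) c - 1 + cC S (H w) c.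
Proof.
move=> wS Kw.
have Kw' : (K w == 1) || (K w == 2) by rewrite Kw /att; case: (c).
have -> : [set u in S | adj w u] = [set u in S |
   ((K u == att c) && (H u == H w) && (u != w)) || ((K u == 0) && (H u == H w) && (cls u == c))].
  apply/setP => u; rewrite !inE adj_att // Kw.
  by have -> : (att c == 1) = c by case: (c).
rewrite card_or; first by rewrite card_minus // Kw !eqxx.
by move=> u _ /andP [/andP [/eqP -> _] _] /andP [/andP [/eqP]]; rewrite /att; case: (c).
Qed.

Lemma cHo_split (S : {set V}) h : cHo S h = cC S h true + cC S h false.
Proof.
rewrite /cHo /cC -(@card_or S (fun u => (K u == 0) && (H u == h) && (cls u == true))
   (fun u => (K u == 0) && (H u == h) && (cls u == false))); last by move=> u _ /andP [_ /eqP ->] /andP [_ /eqP].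
apply: eq_card => u; rewrite !inE. by case: (cls u); rewrite /= ?andbT ?andbF ?orbF ?andbA.
Qed.

Lemma card_pos (S : {set V}) (P : pred V) v : v \in S -> P v -> 0 < #|[set u in S | P u]|.
Proof. by move=> vS Pv; apply/card_gt0P; exists v; rewrite inE vS. Qed.

Lemma card_pos_ex (S : {set V}) (P : pred V) : 0 < #|[set u in S | P u]| -> exists2 v, v \in S & P v.
Proof. by case/card_gt0P => v; rewrite inE => /andP [vS Pv]; exists v. Qed.


Definition reg (S : {set V}) d := forall v, v \in S -> #|[set u in S | adj v u]| = d.

Lemma config_false (S : {set V}) d a b w : reg S d ->
  a \in S -> b \in S -> w \in S -> K a = 0 -> K b = 0 -> H b = H a ->
  cls b = ~~ cls a -> K w = att (cls a) -> H w = H a -> False.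
Proof.
move=> R aS bS wS Ka Kb Hb cb Kw Hw.
have da := deg_host aS Ka; rewrite R // in da.
have db := deg_host bS Kb; rewrite R // Hb cb in db.
have tc : 0 < cT S (H a) (cls a).
  by apply: (card_pos (v := w)) => //; rewrite Kw Hw !eqxx.
have ho : 0 < cC S (H a) (cls a).
  by apply: (card_pos (v := a)) => //; rewrite Ka !eqxx.
have tnc : 0 < cT S (H a) (~~ cls a) by lia.
have [w' w'S /andP [/eqP Kw' /eqP Hw']] := card_pos_ex tnc.
have dw := deg_att w'S Kw'; rewrite R // Hw' in dw.
have sp := cHo_split S (H a).
move: ho tnc dw db da sp; case: (cls a) => /=; lia.
Qed.

Lemma p3 (S : {set V}) d x y z : reg S d -> x \in S -> y \in S -> z \in S ->
  adj x y -> adj y z -> x != z -> adj x z.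
Proof.
move=> R xS yS zS axy ayz nxz; apply/negPn/negP => nxz'.
rewrite adj_sym in axy.
have := K_le y; case Ky: (K y) => [|[|[|[|]]]] // _.
-
  rewrite !adj_host // in axy ayz.
  case/orP: axy => [/andP [/andP [/eqP Kx /eqP Hx] _]|/andP [/eqP Kx /eqP Hx]];
  case/orP: ayz => [/andP [/andP [/eqP Kz /eqP Hz] _]|/andP [/eqP Kz /eqP Hz]].
  + by move: nxz'; rewrite adj_host // Kz Hz Hx !eqxx /= [z == x]eq_sym nxz.
  + have cx : cls x = ~~ cls y.
      move: nxz'; rewrite adj_host // Kz Hz Hx !eqxx /= andbT.
      by rewrite /att; case: (cls x); case: (cls y).
    exact: (config_false (a := y) (b := x) (w := z) R).
  + have cz : cls z = ~~ cls y.
      move: nxz'; rewrite adj_sym adj_host // Kx Hz Hx !eqxx /= andbT.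
      by rewrite /att; case: (cls z); case: (cls y).
    exact: (config_false (a := y) (b := z) (w := x) R).
  + have Kx' : (K x == 1) || (K x == 2) by rewrite Kx /att; case: (cls y).
    by move: nxz'; rewrite adj_att // Kz Hz Hx Kx !eqxx /= [z == x]eq_sym nxz.
- have Ky' : (K y == 1) || (K y == 2) by rewrite Ky.
  rewrite !adj_att // in axy ayz.
  case/orP: axy => [/andP [/andP [/eqP Kx /eqP Hx] _]|/andP [/andP [/eqP Kx /eqP Hx] /eqP cx]];
  case/orP: ayz => [/andP [/andP [/eqP Kz /eqP Hz] _]|/andP [/andP [/eqP Kz /eqP Hz] /eqP cz]].
  + by move: nxz'; rewrite adj_att ?Kx ?Ky // Kz Hz Hx Ky !eqxx /= [z == x]eq_sym nxz.
  + by move: nxz'; rewrite adj_att ?Kx ?Ky // Kz Hz Hx cz Ky !eqxx /=.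
  + by move: nxz'; rewrite adj_sym adj_att ?Kz ?Ky // Kx Hz Hx cx Ky !eqxx /=.
  + by move: nxz'; rewrite adj_host // Kz Hz Hx !eqxx /= [z == x]eq_sym nxz.
- have Ky' : (K y == 1) || (K y == 2) by rewrite Ky.
  rewrite !adj_att // in axy ayz.
  case/orP: axy => [/andP [/andP [/eqP Kx /eqP Hx] _]|/andP [/andP [/eqP Kx /eqP Hx] /eqP cx]];
  case/orP: ayz => [/andP [/andP [/eqP Kz /eqP Hz] _]|/andP [/andP [/eqP Kz /eqP Hz] /eqP cz]].
  + by move: nxz'; rewrite adj_att ?Kx ?Ky // Kz Hz Hx Ky !eqxx /= [z == x]eq_sym nxz.
  + by move: nxz'; rewrite adj_att ?Kx ?Ky // Kz Hz Hx cz Ky !eqxx /=.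
  + by move: nxz'; rewrite adj_sym adj_att ?Kz ?Ky // Kx Hz Hx cx Ky !eqxx /=.
  + by move: nxz'; rewrite adj_host // Kz Hz Hx !eqxx /= [z == x]eq_sym nxz.
- rewrite !adj_st // in axy ayz.
  move: axy ayz => /andP [/eqP tx _] /andP [/eqP tz _].
  by move: nxz'; rewrite /adj nxz tx tz eqxx.
Qed.


Definition si (x : V) : nat := match tag x with inl _ => 0 | inr s => val s end.

Lemma st_tag u v : K u = 3 -> K v = 3 -> si u = si v -> tag u = tag v.
Proof.
case: u => [[[h k]|s] i]; case: v => [[[h' k']|s'] i'] //=; rewrite /K /si /=.
- by move=> E; have := ltn_ord k; rewrite E.
- by move=> E; have := ltn_ord k; rewrite E.
- by move=> _ E; have := ltn_ord k'; rewrite E.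
- by move=> _ _ /val_inj ->.
Qed.

Lemma si_lt u : si u < ns.
Proof. case: u => [[[h k]|s] i] //=; [idtac | exact: ltn_ord]; rewrite /si /ns /=; lia. Qed.

Lemma H_lt u : K u <= 2 -> H u < p - 1.
Proof. case: u => [[[h k]|s] i] //= _; exact: ltn_ord. Qed.

Lemma ix_lt u : ix u < usz (tag u).
Proof. exact: ltn_ord. Qed.

Lemma usz_K u : usz (tag u) = if K u == 0 then hs (H u) else if K u == 1 then mm else q - 1.
Proof. by case: u => [[[h k]|s] i]. Qed.

Definition tokn (x : V) : nat :=
  if K x == 3 then 2 * (p - 1) + si x else 2 * H x + (if K x == 0 then cls x else K x == 1).

Lemma indep_bound (S : {set V}) : reg S 0 -> #|S| <= q * p - 1.
Proof.
move=> R.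
have q2 : 2 <= q by apply: prime_gt1.
have nadj : forall x y, x \in S -> y \in S -> ~~ adj x y.
  move=> x y xS yS; apply/negP => axy.
  have := R x xS; move/eqP; rewrite cards_eq0 => /eqP /setP /(_ y).
  by rewrite !inE yS axy.
have px : forall x, K x <= 2 -> H x < p - 1 := H_lt.
have tinj : {in S &, injective tokn}.
  move=> x y xS yS; rewrite /tokn => E; apply/eqP; apply/negPn/negP => nxy.
  apply: (negP (nadj x y xS yS)).
  have := K_le x; have := K_le y; have := px x; have := px y.
  have := si_lt x; have := si_lt y.
  case Kx: (K x) E => [|[|[|[|]]]] //=; case Ky: (K y) => [|[|[|[|]]]] //= E _ _ py px' _ _.
  - have Hxy : H x = H y by move: E; case: (cls x); case: (cls y) => /=; lia.
    by rewrite adj_host // Ky Hxy !eqxx /= [y == x]eq_sym nxy.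
  - have [Hxy cx] : H x = H y /\ cls x = true by move: E; case: (cls x) => /=; lia.
    by rewrite adj_host // Ky Hxy cx !eqxx /=.
  - have [Hxy cx] : H x = H y /\ cls x = false by move: E; case: (cls x) => /=; lia.
    by rewrite adj_host // Ky Hxy cx !eqxx /=.
  - by move: E (px' isT); case: (cls x) => /=; lia.
  - have [Hxy cy] : H x = H y /\ cls y = true by move: E; case: (cls y) => /=; lia.
    by rewrite adj_sym adj_host // Kx Hxy cy !eqxx /=.
  - have Hxy : H x = H y by lia.
    by rewrite adj_att ?Kx // Ky Hxy !eqxx /= [y == x]eq_sym nxy.
  - by lia.
  - by move: E (px' isT); lia.
  - have [Hxy cy] : H x = H y /\ cls y = false by move: E; case: (cls y) => /=; lia.
    by rewrite adj_sym adj_host // Kx Hxy cy !eqxx /=.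
  - by lia.
  - have Hxy : H x = H y by lia.
    by rewrite adj_att ?Kx // Ky Hxy !eqxx /= [y == x]eq_sym nxy.
  - by move: E (px' isT); lia.
  - by move: E (py isT); case: (cls y) => /=; lia.
  - by move: E (py isT); lia.
  - by move: E (py isT); lia.
  - have tg : tag x = tag y by apply: st_tag => //; lia.
    by rewrite /adj nxy tg eqxx.
apply: (inj_bound tinj) => x _; rewrite /tokn; have := K_le x; have := si_lt x; have := px x.
case Kx: (K x) => [|[|[|[|]]]] //= pxx sx _.
- by move: (pxx isT); case: (cls x) => /=; rewrite /ns in q2 *; nia.
- by move: (pxx isT); rewrite /ns in q2 *; nia.
- by move: (pxx isT); rewrite /ns in q2 *; nia.
- by rewrite /ns in sx; nia.
Qed.


Definition clique (B : {set V}) := forall y z, y \in B -> z \in B -> y != z -> adj y z.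

Lemma same_tag_ix y z : tag y = tag z -> ix y = ix z -> y = z.
Proof.
case: y => [u i]; case: z => [u' i'] /= E; subst u'.
by rewrite /ix /= => /val_inj ->.
Qed.

Lemma mm_le : mm <= q - 1.
Proof. exact: geq_minl. Qed.

Lemma mm_le2 : mm <= p - q.
Proof. exact: geq_minr. Qed.

Lemma clique_nohost (B : {set V}) : clique B -> (forall y, y \in B -> K y != 0) -> #|B| <= q - 1.
Proof.
move=> cB nh.
case: (set_0Vmem B) => [-> | [x xB]]; first by rewrite cards0.
have tg : forall y, y \in B -> tag y = tag x.
  move=> y yB; case: (eqVneq x y) => [-> // | nxy].
  have axy := cB x y xB yB nxy.
  have := K_le x; have := nh x xB.
  case Kx: (K x) => [|[|[|[|]]]] //= _ _.
  - rewrite adj_att ?Kx // in axy.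
    case/orP: axy => [/andP [/andP [/eqP Ky /eqP Hy] _] | /andP [/andP [/eqP Ky _] _]].
      by apply/eqP; rewrite tagE ?Ky ?Kx // Hy !eqxx.
    by move: (nh y yB); rewrite Ky.
  - rewrite adj_att ?Kx // in axy.
    case/orP: axy => [/andP [/andP [/eqP Ky /eqP Hy] _] | /andP [/andP [/eqP Ky _] _]].
      by apply/eqP; rewrite tagE ?Ky ?Kx // Hy !eqxx.
    by move: (nh y yB); rewrite Ky.
  - by rewrite adj_st // in axy; case/andP: axy => /eqP.
apply: (@leq_trans (usz (tag x))).
  apply: (inj_bound (f := ix)).
    by move=> y z yB zB E; apply: same_tag_ix => //; rewrite !tg.
  by move=> y yB; rewrite -(tg y yB); apply: ix_lt.
have := nh x xB; rewrite usz_K; case: (K x == 0) => //= _.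
by case: (K x == 1) => //; apply: mm_le.
Qed.

Lemma hatt y z : K y = 0 -> adj y z -> K z != 0 -> (K z == 1) = cls y /\ H z = H y.
Proof.
move=> Ky; rewrite adj_host //; case/orP => [/andP [/andP [/eqP -> _] _] // | /andP [/eqP -> /eqP ->]].
by rewrite /att; case: (cls y).
Qed.

Lemma att_nadj y z : K y = 1 -> K z = 2 -> ~~ adj y z.
Proof. by move=> Ky Kz; rewrite adj_att ?Ky // Kz. Qed.

Lemma clique_host (B : {set V}) x0 : clique B -> x0 \in B -> K x0 = 0 -> #|B| <= hs (H x0).
Proof.
move=> cB x0B K0.
have q2 : 2 <= q by apply: prime_gt1.
have hb : p - 1 <= hs (H x0) by rewrite /hs; case: ifP => _ //; nia.
have str : forall y, y \in B -> H y = H x0 /\ (K y <= 2).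
  move=> y yB; case: (eqVneq x0 y) => [<- | nxy]; first by rewrite K0.
  have := cB x0 y x0B yB nxy; rewrite adj_host //.
  case/orP => [/andP [/andP [/eqP Ky /eqP Hy] _] | /andP [/eqP Ky /eqP Hy]]; split => //.
    by rewrite Ky.
  by rewrite Ky /att; case: (cls x0).
pose f y := if K y == 0 then ix y else (if K y == 1 then q - 1 else 0) + ix y.
have finj : {in B &, injective f}.
  move=> y z yB zB E; apply/eqP; apply/negPn/negP => nyz.
  have ayz := cB y z yB zB nyz.
  have ayz' : adj y z -> adj z y by rewrite adj_sym.
  have [Hy Ky2] := str y yB; have [Hz Kz2] := str z zB.
  have iy := ix_lt y; have iz := ix_lt z; rewrite !usz_K in iy iz.
  move: E ayz iy iz Ky2 Kz2; rewrite /f.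
  case Ky: (K y) => [|[|[|]]] //=; case Kz: (K z) => [|[|[|]]] //= E ayz iy iz _ _.
  - by apply: (elimN eqP nyz); apply: same_tag_ix => //; apply/eqP; rewrite tagE ?Ky // Kz Hy Hz !eqxx.
  - have nz : K z != 0 by rewrite Kz.
    by move: (hatt Ky ayz nz) => [+ _]; rewrite Kz /cls; case: ltnP => //= hl _; lia.
  - have nz : K z != 0 by rewrite Kz.
    by move: (hatt Ky ayz nz) => [+ _]; rewrite Kz /cls; case: ltnP => //= hl _; lia.
  - have ny : K y != 0 by rewrite Ky.
    by move: (hatt Kz (ayz' ayz) ny) => [+ _]; rewrite Ky /cls; case: ltnP => //= hl _; lia.
  - apply: (elimN eqP nyz); apply: same_tag_ix; last by lia.
    by apply/eqP; rewrite tagE ?Ky // Kz Hy Hz !eqxx.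
  - by move: (att_nadj Ky Kz); rewrite ayz.
  - have ny : K y != 0 by rewrite Ky.
    by move: (hatt Kz (ayz' ayz) ny) => [+ _]; rewrite Ky /cls; case: ltnP => //= hl _; lia.
  - by move: (att_nadj Kz Ky); rewrite adj_sym ayz.
  - apply: (elimN eqP nyz); apply: same_tag_ix; last by lia.
    by apply/eqP; rewrite tagE ?Ky // Kz Hy Hz !eqxx.
apply: (inj_bound finj) => y yB; have [Hy Ky2] := str y yB; have iy := ix_lt y; rewrite usz_K in iy.
have mq := mm_le2; have lq := hqp.
move: iy Ky2; rewrite /f Hy; case: (K y) => [|[|[|]]] //=; lia.
Qed.


Lemma divs t : t %| q * p -> [\/ t = 1, t = q, t = p | t = q * p].
Proof.
move=> tqp.
have p0 : 0 < p by apply: prime_gt0.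
case: (boolP (p %| t)) => [pt | npt].
  have E := divnK pt.
  have : t %/ p %| q.
    by rewrite -(dvdn_pmul2r p0) E.
  case/primeP: hq => _ /(_ (t %/ p)) H /H /orP [] /eqP k.
    by constructor 3; rewrite -E k mul1n.
  by constructor 4; rewrite -E k.
have cpt : coprime t p by rewrite coprime_sym prime_coprime.
have : t %| q by rewrite -(Gauss_dvdl _ cpt).
case/primeP: hq => _ /(_ t) H /H /orP [] /eqP k.
  by constructor 1.
by constructor 2.
Qed.

Lemma reg_pos_false (S : {set V}) d : reg S d -> 0 < d -> #|S| = q * p -> False.
Proof.
move=> R d0 cS.
have q2 : 2 <= q by apply: prime_gt1.
pose R' := fun x y : V => (x == y) || adj x y.
have eqR : {in S & &, equivalence_rel R'}.
  move=> x y z xS yS zS; split; first by rewrite /R' eqxx.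
  rewrite /R' => /orP [/eqP <- // | axy].
  case: (eqVneq x z) => [<- | nxz]; first by rewrite adj_sym axy orbT.
  case: (eqVneq y z) => [<- | nyz]; first by rewrite axy orbT.
  apply/idP/idP => /= h.
    by apply: (p3 R yS xS zS) => //; rewrite adj_sym.
  exact: (p3 R xS yS zS).
have partP := equivalence_partitionP eqR.
set P := equivalence_partition R' S in partP.
have blk : forall B, B \in P -> exists2 x, x \in S & B = [set y in S | R' x y].
  by move=> B /imsetP [x xS ->]; exists x.
have cardB : forall B, B \in P -> #|B| = d.+1.
  move=> B /blk [x xS ->].
  rewrite (@card_or S (fun y => x == y) (adj x)); last first.
    by move=> u _ /eqP <-; rewrite adj_irr.
  rewrite (R x xS); change (#|[set u in S | x == u]| + d = 1 + d); congr (_ + _).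
  have -> : [set y in S | x == y] = [set x].
    apply/setP => y; rewrite !inE; case: (eqVneq x y) => [<-|ne]; first by rewrite xS.
    by rewrite andbF.
  by rewrite cards1.
have cliqueB : forall B, B \in P -> clique B.
  move=> B /blk [x xS ->] y z; rewrite !inE => /andP [yS xy] /andP [zS xz] nyz.
  have : R' y z by rewrite -((eqR x y z xS yS zS).2 xy).
  by rewrite /R' (negbTE nyz).
have cS' := card_uniform_partition cardB partP.
have hostB : forall B, B \in P -> q <= d.+1 -> exists2 y, y \in B & K y = 0.
  move=> B BP qd.
  case: (boolP [exists y in B, K y == 0]) => [/exists_inP [y yB /eqP Ky] | /exists_inPn nh].
    by exists y.
  by have := clique_nohost (cliqueB B BP) nh; rewrite cardB //; lia.
pose phi (B : {set V}) := if [pick y in B | K y == 0] is Some y then H y else 0.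
have phiP : forall B, B \in P -> q <= d.+1 -> exists2 y, (y \in B) && (K y == 0) & phi B = H y.
  move=> B BP qd; rewrite /phi; case: pickP => [y yBK | none]; first by exists y.
  by have [y yB Ky] := hostB B BP qd; move: (none y); rewrite yB Ky eqxx.
have blkeq : forall B1 B2 y1 y2, B1 \in P -> B2 \in P -> y1 \in B1 -> y2 \in B2 -> R' y1 y2 -> B1 = B2.
  move=> B1 B2 y1 y2 /blk [x1 x1S ->] /blk [x2 x2S ->]; rewrite !inE.
  move=> /andP [y1S r1] /andP [y2S r2] r12.
  apply/setP => u; rewrite !inE; case uS: (u \in S) => //=.
  rewrite ((eqR x1 y1 u x1S y1S uS).2 r1) ((eqR y1 y2 u y1S y2S uS).2 r12).
  by rewrite ((eqR x2 y2 u x2S y2S uS).2 r2).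
have phi_inj : q <= d.+1 -> {in P &, injective phi}.
  move=> qd B1 B2 B1P B2P.
  have [y1 /andP [y1B /eqP K1] ->] := phiP B1 B1P qd.
  have [y2 /andP [y2B /eqP K2] ->] := phiP B2 B2P qd.
  move=> Hy; apply: (blkeq B1 B2 y1 y2) => //.
  rewrite /R'; case: (eqVneq y1 y2) => //= ne.
  by rewrite adj_host // K2 Hy !eqxx /= eq_sym ne.
have Bbound : forall B, B \in P -> q <= d.+1 -> d.+1 <= hs (phi B).
  move=> B BP qd; have [y /andP [yB /eqP Ky] ->] := phiP B BP qd.
  by rewrite -(cardB B BP); apply: (clique_host (cliqueB B BP) yB Ky).
have Pne : 0 < #|P|.
  by rewrite lt0n; apply/negP => /eqP P0; move: cS; rewrite cS' P0 mul0n => /esym /eqP; rewrite muln_eq0 => /orP [] /eqP E; [move: (prime_gt0 hq) | move: (prime_gt0 hp)]; rewrite E.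
have dv : d.+1 %| q * p by rewrite -cS cS' dvdn_mull.
have [B0 B0P] : exists B0, B0 \in P by move/card_gt0P: Pne => [B0 ?]; exists B0.
case: (divs dv) => [E | E | E | E].
- by move: d0; rewrite -[d]/(d.+1.-1) E.
- have qd : q <= d.+1 by rewrite E.
  have : #|P| <= p - 1.
    apply: (inj_bound (phi_inj qd)) => B BP.
    by have [y /andP [_ /eqP Ky] ->] := phiP B BP qd; apply: H_lt; rewrite Ky.
  have := prime_gt0 hp; have := prime_gt0 hq; move: cS; rewrite cS' E; move=> E1 q0 p0 Pl; have : #|P| * q <= (p-1) * q by rewrite leq_mul2r Pl orbT.
  rewrite mulnBl mul1n E1 [p * q]mulnC; lia.
- have qd : q <= d.+1 by rewrite E ltnW.
  have : #|P| <= q - 1.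
    apply: (inj_bound (phi_inj qd)) => B BP.
    have := Bbound B BP qd; rewrite /hs E; case: ifP => // _; lia.
  have := prime_gt0 hp; have := prime_gt0 hq; move: cS; rewrite cS' E.
  move=> E1 q0 p0 Pl; have : #|P| * p <= (q-1) * p by rewrite leq_mul2r Pl orbT.
  rewrite mulnBl mul1n E1; lia.
- have qd : q <= d.+1 by rewrite E; apply: leq_pmulr; apply: prime_gt0.
  by have := Bbound B0 B0P qd; rewrite /hs E; case: ifP => _; nia.
Qed.



Lemma noreg_adj : noreg adj (q * p).
Proof.
move=> S cS [d R].
case: d R => [|d] R.
  have := indep_bound R; rewrite cS.
  by have := prime_gt0 hp; have := prime_gt0 hq; nia.
exact: (reg_pos_false R).
Qed.

Lemma sum_hs : \sum_(i < p - 1) hs i = (q - 1) * (q * p - 1) + (p - q) * (p - 1).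
Proof.
rewrite -(big_mkord xpredT hs) (big_cat_nat (n := q - 1)) //=; last by lia.
rewrite (eq_big_nat _ _ (F2 := fun _ => q * p - 1)); last first.
  by move=> i /andP [_ ilt]; rewrite /hs ilt.
rewrite [X in _ + X](eq_big_nat _ _ (F2 := fun _ => p - 1)); last first.
  by move=> i /andP [ile _]; rewrite /hs ltnNge ile.
rewrite !sum_nat_const_nat.
have q1 := prime_gt1 hq; rewrite subn0; congr (_ + _ * _); lia.
Qed.

Lemma cardV : #|{: V}| = (q - 1) * (q * p - 1) + (p - q) * (p - 1) + (p - 1) * (mm + (q - 1)) + ns * (q - 1).
Proof.
rewrite card_tagged.
rewrite sumnE big_map big_enum /= big_sumType /=.
rewrite (eq_bigl xpredT) // (eq_bigl xpredT) //.
rewrite sum_nat_const !card_ord.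
rewrite (eq_bigr (fun x => usz (inl x))); last by move=> [h k] _; rewrite card_ord.
rewrite (eq_bigr (fun x => usz (inl (x.1, x.2)))); last by move=> [h k].
rewrite -(pair_bigA _ (fun h k => usz (inl (h, k)))).
have inner : forall h : 'I_(p - 1), \sum_(k < 3) usz (inl (h, k)) = hs h + mm + (q - 1).
  by move=> h; rewrite !big_ord_recr big_ord0 /=.
rewrite (eq_bigr _ (fun h _ => inner h)) !big_split /= sum_hs !sum_nat_const card_ord.
by rewrite mulnDr !addnA.
Qed.

End Constr.
Lemma count_ge p q : prime p -> prime q -> q < p ->
  p ^ 2 + 2 * q ^ 2 * p - 4 * q * p + 2 + (p - 1) * minn (q - 1) (p - q) - 1 <=
  (q - 1) * (q * p - 1) + (p - q) * (p - 1) + (p - 1) * (minn (q - 1) (p - q) + (q - 1)) + (q * p - 2 * p + 1) * (q - 1).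
Proof.
move=> hp hq hqp; have q2 := prime_gt1 hq.
set m := minn _ _; clearbody m.
have [a Ea] : exists a, q = a.+2 by exists (q - 2); lia.
have [b Eb] : exists b, p = q + b.+1 by exists (p - q.+1); lia.
have f1 : q - 1 = a.+1 by lia.
have f2 : p - q = b.+1 by lia.
have f3 : p - 1 = a + b.+2 by lia.
have f4 : q * p - 1 = a * p + p + (a + b.+2) by rewrite Ea !mulSn; lia.
have f5 : q * p - 2 * p + 1 = a * p + 1 by rewrite Ea !mulSn; lia.
have g : 2 * q ^ 2 * p = 2 * a * (q * p) + 4 * (q * p) by rewrite Ea; lia.
have f6 : p ^ 2 + 2 * q ^ 2 * p - 4 * q * p = p ^ 2 + 2 * a * (q * p) by rewrite g -mulnA; lia.
rewrite f6 f1 f2 f3 f4 f5.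
rewrite Eb Ea; lia.
Qed.

Theorem theorem8 (p q : nat) (hp : prime p) (hq : prime q) (hqp : q < p) :
  forall n : nat, 0 < n -> forces_regular (q * p) n ->
    p ^ 2 + 2 * q ^ 2 * p - 4 * q * p + 2 + (p - 1) * minn (q - 1) (p - q) <= n.
Proof.
move=> n _ F; rewrite leqNgt; apply/negP => nB.
have hn : n <= #|{: V p q}|.
  rewrite (cardV hp hq hqp); have := count_ge hp hq hqp; rewrite /mm /ns; lia.
exact: (transfer (adj_irr (p:=p) (q:=q)) (adj_sym (p:=p) (q:=q)) hn (noreg_adj hp hq hqp) F).
Qed.
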